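(* Let $h\in\mathbb{Q}[x]$ be a nonzero $t$-sparse polynomial with nonzero constant term, written $h=a_1+a_2x^{d_2}+\cdots+a_tx^{d_t}$ with $0<d_2<\cdots<d_t$. Suppose the complete factorization of $h$ over $\mathbb{Q}[x]$ is $h=a_th_1^{e_1}\cdots h_k^{e_k}$, with each $h_i$ monic and irreducible and the $h_i$ distinct. Then $\max_i e_i\le t-1$.
   Context: A polynomial is $t$-sparse if it has at most $t$ nonzero coefficients in the power basis. *)

(* Defs.v *)
From HB Require Import structures.
From mathcomp Require Import all_boot all_order all_algebra.
Set Implicit Arguments. Unset Strict Implicit. Unset Printing Implicit Defensive.
Import GRing.Theory Num.Theory.
Local Open Scope ring_scope.

Definition sparse {R : nzRingType} (t : nat) (p : {poly R}) : bool :=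
  (count (fun c : R => c != 0%R) (polyseq p) <= t)%N.

(* Main.v *)
Require Import Defs.
From HB Require Import structures.
From mathcomp Require Import all_boot all_order all_algebra.
Import GRing.Theory Num.Theory.
Local Open Scope ring_scope.

Definition nz (p : {poly rat}) := count (fun c : rat => c != 0) (polyseq p).

Lemma nz_iota (p : {poly rat}) n : (size p <= n)%N ->
  nz p = count (fun i => p`_i != 0) (iota 0 n).
Proof.
move=> hn; rewrite -(subnKC hn) iotaD count_cat.
have -> : count (fun i => p`_i != 0) (iota (0 + size p) (n - size p)) = 0%N.
  apply/eqP; rewrite -leqn0 leqNgt -has_count; apply/hasPn => i.
  rewrite mem_iota add0n => /andP[hi _]; by rewrite negbK nth_default.
by rewrite addn0 /nz -{1}(mkseq_nth 0 p) /mkseq count_map.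
Qed.

Lemma nz_deriv (p : {poly rat}) : p`_0 != 0 -> (nz p^`() < nz p)%N.
Proof.
move=> h0.
have hs : (0 < size p)%N.
  by rewrite lt0n size_poly_eq0; apply: contraNneq h0 => ->; rewrite coef0.
rewrite (@nz_iota p (size p) (leqnn _)).
have hd : (size p^`() <= (size p).-1)%N.
  by rewrite -ltnS prednK // lt_size_deriv // -size_poly_eq0 -lt0n.
rewrite (@nz_iota _ _ hd).
case: (size p) hs => // n _ /=.
rewrite h0 add1n ltnS.
have -> : iota 1 n = map (addn 1) (iota 0 n) by rewrite -iotaDl.
rewrite count_map; apply: eq_leq; apply: eq_count => i /=.
by rewrite coef_deriv mulrn_eq0 add1n.
Qed.

Lemma nz_gt0 (p : {poly rat}) : p != 0 -> (0 < nz p)%N.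
Proof.
move=> hp; rewrite (@nz_iota _ _ (leqnn _)) -has_count; apply/hasP.
have hs : (0 < size p)%N by rewrite lt0n size_poly_eq0.
exists (size p).-1; first by rewrite mem_iota leq0n add0n /= ltn_predL.
by have := hp; rewrite -lead_coef_eq0.
Qed.

Lemma dvd_deriv (g p : {poly rat}) e : g ^+ e.+1 %| p -> g ^+ e %| p^`().
Proof.
case/dvdpP => q ->; rewrite derivM deriv_exp /=.
apply: dvdp_add; first by rewrite exprSr mulrA; apply: dvdp_mulr; apply: dvdp_mulIr.
by apply: dvdp_mull; rewrite -mulr_natr; apply: dvdp_mulr; apply: dvdp_mulIr.
Qed.

Lemma key t : forall (g p : {poly rat}) e, (1 < size g)%N -> g`_0 != 0 ->
  p != 0 -> (nz p <= t)%N -> g ^+ e %| p -> (e < t)%N.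
Proof.
elim: t => [|t IH] g p e hg g0 hp.
  by rewrite leqn0 => /eqP hz; move: (@nz_gt0 _ hp); rewrite hz.
move=> hn.
have [n hsn] : exists n, (size p <= n)%N by exists (size p).
elim: n p hp hn hsn e => [|n IHn] p hp hn hsn e hd.
  by move: hsn; rewrite leqn0 size_poly_eq0 (negbTE hp).
have cg : coprimep g 'X.
  by rewrite -[X in coprimep _ X]subr0 -polyC0 coprimep_XsubC /root horner_coef0.
case: (eqVneq p`_0 0) => p0.
  have : root p 0 by rewrite /root horner_coef0 p0.
  case/factor_theorem => q hq; rewrite polyC0 subr0 in hq.
  have hq0 : q != 0 by apply: contraNneq hp => hq0; rewrite hq hq0 mul0r.
  have sq : polyseq p = 0 :: polyseq q by rewrite hq polyseqMX.
  apply: (IHn q hq0).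
  - by move: hn; rewrite /nz sq /= add0n.
  - by move: hsn; rewrite sq.
  - by move: hd; rewrite hq Gauss_dvdpl //; apply: coprimep_expl.
case: e hd => // e hd.
have hgp : (size g <= size p)%N.
  apply: dvdp_leq hp _; apply: dvdp_trans hd; rewrite exprS; apply: dvdp_mulIl.
have hp' : p^`() != 0.
  apply/negP => /eqP /(congr1 (fun q : {poly rat} => q`_(size p).-2)).
  rewrite coef_deriv coef0 => /eqP; rewrite mulrn_eq0 /=.
  have -> : (size p).-2.+1 = (size p).-1 by have := leq_trans hg hgp; case: (size p) => [|[|m]].
  by rewrite -/(lead_coef p) lead_coef_eq0 (negbTE hp).
rewrite ltnS; apply: (IH g p^`() e hg g0 hp').
  by rewrite -ltnS; apply: leq_trans hn; apply: nz_deriv.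
exact: dvd_deriv.
Qed.

Theorem lemma4p1 (t : nat) (h : {poly rat}) (k : nat)
    (hs : 'I_k -> {poly rat}) (e : 'I_k -> nat) :
  h != 0 -> sparse t h -> h`_0 != 0 ->
  (forall i, hs i \is monic) ->
  (forall i, irreducible_poly (hs i)) ->
  injective hs ->
  (forall i, (0 < e i)%N) ->
  h = lead_coef h *: \prod_(i < k) hs i ^+ e i ->
  (\max_(i < k) e i <= t - 1)%N.
Proof.
move=> hh hsp h0 hmon hirr _ he hf.
apply/bigmax_leqP => i _.
have hdv : hs i ^+ e i %| h.
  rewrite hf dvdpZr ?lead_coef_eq0 // (bigD1 i) //=; apply: dvdp_mulr; exact: dvdpp.
have g0 : (hs i)`_0 != 0.
  apply: contraNneq h0 => hz.
  have : hs i %| h.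
    apply: dvdp_trans hdv; move: (he i); case: (e i) => // n _.
    by rewrite exprS; apply: dvdp_mulIl.
  case/dvdpP => q hq.
  by rewrite -horner_coef0 hq hornerM [(hs i).[0]]horner_coef0 hz mulr0.
have := @key t (hs i) h (e i) (hirr i).1 g0 hh hsp hdv.
move=> H; rewrite subn1 -ltnS prednK //; exact: leq_ltn_trans (leq0n _) H.
Qed.
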